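(* Let $N\ge2$, $p\ge1$, and suppose $f_n\rightarrowtail f$ in $L^p(\mathbb T^N)$. For $1\le j\le N-1$ and $g\in L^1(\mathbb T^N)$ define $\hat g\in L^1(\mathbb T^{N-j})$ by $\hat g(t_{j+1},\dots,t_N)=\int_{\mathbb T^j}g(\cdot,t_{j+1},\dots,t_N)\,d\mu_j$. Then, for each $j=1,\dots,N-1$, $\hat f_n\rightarrowtail\hat f$ in $L^p(\mathbb T^{N-j})$.
   Context: $\mathbb T$ is the unit circle and $\mu_j$ the normalized Lebesgue measure on $\mathbb T^j$. For $M\ge1$, a sequence $f_n\in L^2(\mathbb T^M)$ converges to $f\in L^p(\mathbb T^M)$ ($p\ge1$) ''restricted to hyperplanes'', written $f_n\rightarrowtail f$ in $L^p(\mathbb T^M)$, if $f_n\to f$ in $L^p(\mathbb T^M)$ and, for each $l=2,\dots,M$ and a.e. $(t_l,\dots,t_M)\in\mathbb T^{M-l+1}$, $f_n(\cdot,t_l,\dots,t_M)\to f(\cdot,t_l,\dots,t_M)$ in $L^p(\mathbb T^{l-1})$ as functions of the first $l-1$ variables. *)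

(* Defs.v *)
From HB Require Import structures.
From mathcomp Require Import all_boot all_order all_algebra.
From mathcomp Require Import all_classical all_reals all_analysis.
From mathcomp.real_closed Require Import complex.

Set Implicit Arguments.
Unset Strict Implicit.
Unset Printing Implicit Defensive.

Import Order.TTheory GRing.Theory Num.Theory.
Local Open Scope ring_scope.
Local Open Scope classical_set_scope.

(* The torus T^M.  The circle T is parametrized by the angle t/(2pi)   *)
(* in [0,1]; its normalized Lebesgue measure mu_1 is the uniform       *)
(* probability on [0,1].  T^M is built as nested pairs                 *)
(* so a point of T^M is (t_1, (t_2, ..., (t_M, tt))), and mu_M is the   *)
(* (iterated) product measure mu_1 \x mu_(M-1), with mu_0 = dirac tt.   *)

Fixpoint torus_sig (R : realType) (M : nat) : {d : measure_display & measurableType d} :=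
  match M with
  | 0 => existT _ _ (unit : measurableType _)
  | M'.+1 => existT _ _ ((measurableTypeR R * projT2 (torus_sig R M'))%type : measurableType _)
  end.

Definition torus (R : realType) (M : nat) : measurableType (projT1 (torus_sig R M)) :=
  projT2 (torus_sig R M).

Definition mu1 (R : realType) : probability (measurableTypeR R) R :=
  uniform_prob (@ltr01 R).

Fixpoint torus_measure (R : realType) (M : nat)
  : probability (torus R M) R :=
  match M as M0 return probability (torus R M0) R with
  | 0 => @dirac _ unit tt R
  | M'.+1 => (@mu1 R \x torus_measure R M')%E
  end.

Fixpoint tjoin (R : realType) (a b : nat) : torus R a -> torus R b -> torus R (a + b) :=
  match a as a0 return torus R a0 -> torus R b -> torus R (a0 + b) with
  | 0 => fun _ y => y
  | a'.+1 => fun x y => (x.1, @tjoin R a' b x.2 y)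
  end.

Definition tcast (R : realType) (m n : nat) (e : m = n) (x : torus R m) : torus R n :=
  eq_rect m (fun k => torus R k) x n e.

Definition cmod (R : realType) (z : R[i]) : R := Num.sqrt (complex.Re z ^+ 2 + complex.Im z ^+ 2).

Definition cmeasurable d (T : measurableType d) (R : realType) (g : T -> R[i]) :=
  measurable_fun setT (fun x => complex.Re (g x)) /\ measurable_fun setT (fun x => complex.Im (g x)).

Definition cLnorm d (T : measurableType d) (R : realType)
  (mu : {measure set T -> \bar R}) (p : R) (g : T -> R[i]) : \bar R :=
  Lnorm mu p%:E (fun x => (cmod (g x))%:E).

Definition inLp d (T : measurableType d) (R : realType)
  (mu : {measure set T -> \bar R}) (p : R) (g : T -> R[i]) : Prop :=
  cmeasurable g /\ (cLnorm mu p g < +oo)%E.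

Definition Lp_cvg d (T : measurableType d) (R : realType)
  (mu : {measure set T -> \bar R}) (p : R) (g_ : nat -> T -> R[i]) (g : T -> R[i]) : Prop :=
  (fun n => cLnorm mu p (fun x => g_ n x - g x)) @ \oo --> 0%E.

Definition cintegral d (T : measurableType d) (R : realType)
  (mu : {measure set T -> \bar R}) (g : T -> R[i]) : R[i] :=
  (Rintegral mu setT (fun x => complex.Re (g x)) +i* Rintegral mu setT (fun x => complex.Im (g x)))%C.

(* Convergence restricted to hyperplanes:  f_n >-> f  in L^p(T^M).      *)
(* For l = 2..M write a = l-1 (number of free variables, 1 <= a <= M-1) *)
(* and b = M-l+1 (number of fixed variables t_l..t_M, b >= 1).          *)

Definition restr_cvg (R : realType) (M : nat) (p : R)
  (f_ : nat -> torus R M -> R[i]) (f : torus R M -> R[i]) : Prop :=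
  [/\ forall n, inLp (torus_measure R M) 2 (f_ n),
      inLp (torus_measure R M) p f,
      Lp_cvg (torus_measure R M) p f_ f &
      forall (a b : nat) (e : (a + b)%N = M), (1 <= a)%N -> (1 <= b)%N ->
        {ae torus_measure R b, forall t : torus R b,
          Lp_cvg (torus_measure R a) p
            (fun n x => f_ n (tcast e (tjoin x t)))
            (fun x => f (tcast e (tjoin x t)))}].

Definition hat (R : realType) (j k : nat) (g : torus R (j + k) -> R[i]) : torus R k -> R[i] :=
  fun t => cintegral (torus_measure R j) (fun x => g (tjoin x t)).

(* Main.v *)
Require Import Defs.
From HB Require Import structures.
From mathcomp Require Import all_boot all_order all_algebra.
From mathcomp Require Import all_classical all_reals all_analysis.
From mathcomp Require Import measurable_realfun.
From mathcomp.real_closed Require Import complex.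
Import Order.TTheory GRing.Theory Num.Theory.
Local Open Scope ring_scope.
Local Open Scope classical_set_scope.

Section cmod.
Variable R : realType.
Implicit Types z w : R[i].

Lemma cmod_ge0 z : 0 <= cmod z.
Proof. exact: sqrtr_ge0. Qed.

Lemma Re_le_cmod z : `|complex.Re z| <= cmod z.
Proof.
rewrite /cmod -sqrtr_sqr ler_sqrt ?lerDl ?sqr_ge0 //.
by rewrite addr_ge0 ?sqr_ge0.
Qed.

Lemma Im_le_cmod z : `|complex.Im z| <= cmod z.
Proof.
rewrite /cmod -sqrtr_sqr ler_sqrt ?lerDr ?sqr_ge0 //.
by rewrite addr_ge0 ?sqr_ge0.
Qed.

Lemma cmod_le z : cmod z <= `|complex.Re z| + `|complex.Im z|.
Proof.
set a := complex.Re z; set b := complex.Im z.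
have ha : a ^+ 2 = `|a| ^+ 2 by rewrite -normrX ger0_norm ?sqr_ge0.
have hb : b ^+ 2 = `|b| ^+ 2 by rewrite -normrX ger0_norm ?sqr_ge0.
rewrite /cmod -/a -/b -[X in _ <= X]ger0_norm ?addr_ge0 // -sqrtr_sqr ler_sqrt ?sqr_ge0 //.
rewrite ha hb sqrrD lerD2r -{1}(addr0 (`|a| ^+ 2)) lerD2l.
by rewrite mulrn_wge0 // mulr_ge0.
Qed.

Lemma ReB z w : complex.Re (z - w) = complex.Re z - complex.Re w.
Proof. by case: z => a b; case: w => c d /=; rewrite ?subrr. Qed.

Lemma ImB z w : complex.Im (z - w) = complex.Im z - complex.Im w.
Proof. by case: z => a b; case: w => c d /=; rewrite ?subrr. Qed.

Lemma cmodB z w : cmod (z - w) = cmod (w - z).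
Proof. by rewrite /cmod !ReB !ImB -(sqrrN (complex.Re z - _)) -(sqrrN (complex.Im z - _)) !opprB. Qed.

End cmod.

Lemma measurable_cmod d (T : measurableType d) (R : realType) (g : T -> R[i]) :
  cmeasurable g -> measurable_fun setT (fun x => cmod (g x)).
Proof.
move=> [mr mi].
apply: (measurableT_comp (continuous_measurable_fun (@sqrt_continuous R))).
by apply: measurable_funD; apply: measurable_funX.
Qed.

Lemma cmeasurableB d (T : measurableType d) (R : realType) (g h : T -> R[i]) :
  cmeasurable g -> cmeasurable h -> cmeasurable (fun x => g x - h x).
Proof.
move=> [gr gi] [hr hi]; split.
  rewrite (_ : (fun x => _) = (fun x => complex.Re (g x)) \- (fun x => complex.Re (h x))).
    exact: measurable_funB.
  by apply/funext => x; rewrite /= ReB.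
rewrite (_ : (fun x => _) = (fun x => complex.Im (g x)) \- (fun x => complex.Im (h x))).
  exact: measurable_funB.
by apply/funext => x; rewrite /= ImB.
Qed.

Lemma cmeasurable_comp d d' (T : measurableType d) (U : measurableType d') (R : realType)
  (g : U -> R[i]) (h : T -> U) :
  cmeasurable g -> measurable_fun setT h -> cmeasurable (fun x => g (h x)).
Proof.
move=> [gr gi] mh; split.
  exact: (measurableT_comp gr mh).
exact: (measurableT_comp gi mh).
Qed.
Lemma measurable_tjoin (R : realType) (a b : nat) :
  measurable_fun setT (fun z : torus R a * torus R b => tjoin z.1 z.2).
Proof.
elim: a => [|a IH] /=.
  exact: measurable_snd.
apply: measurable_fun_pair.
  exact: measurableT_comp measurable_fst measurable_fst.
have mg : measurable_fun setT (fun x : (torus R a.+1 * torus R b) => (x.1.2, x.2)).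
  apply: measurable_fun_pair; last exact: measurable_snd.
  exact: measurableT_comp measurable_snd measurable_fst.
exact: (measurableT_comp IH mg).
Qed.
Local Open Scope ereal_scope.

Lemma TI1 (R : realType) (j k : nat) (h : torus R (j + k) -> \bar R) :
  measurable_fun setT h -> (forall x, 0 <= h x) ->
  \int[torus_measure R (j + k)]_w h w =
  \int[torus_measure R j]_x \int[torus_measure R k]_t h (tjoin x t).
Proof.
elim: j h => [|j IH] h mh h0.
  by rewrite /= integral_dirac //= diracE mem_set // mul1e.
have mF : measurable_fun setT (fun z : torus R j.+1 * torus R k => h (tjoin z.1 z.2)).
  exact: (measurableT_comp mh (measurable_tjoin R j.+1 k)).
rewrite [RHS](_ : _ = \int[(@mu1 R \x torus_measure R j)%E]_x \int[torus_measure R k]_t h (tjoin (x : torus R j.+1) t)) //.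
rewrite [LHS](@fubini_tonelli1 _ _ _ _ R (@mu1 R) (torus_measure R (j + k)) h mh h0).
rewrite [RHS](@fubini_tonelli1 _ _ _ _ R (@mu1 R) (torus_measure R j)).
- apply: eq_integral => s _; rewrite /fubini_F.
  apply: (IH (fun w => h (s, w))) => //.
  exact: (@measurable_fun_pair2 _ _ _ (measurableTypeR R) (torus R (j + k)) _ h s mh).
- apply: (@measurable_fun_fubini_tonelli_F _ _ _ _ R (torus_measure R k) _ mF).
  by move=> z; exact: h0.
- by move=> x; apply: integral_ge0 => t _.
Qed.

Lemma measurable_tjoin_l (R : realType) (a b : nat) (t : torus R b) :
  measurable_fun setT (fun x : torus R a => tjoin x t).
Proof.
exact: (measurableT_comp (measurable_tjoin R a b) (pair2_measurable t)).
Qed.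

Lemma measurable_tjoin_r (R : realType) (a b : nat) (x : torus R a) :
  measurable_fun setT (fun t : torus R b => tjoin x t).
Proof.
exact: (measurableT_comp (measurable_tjoin R a b) (pair1_measurable x)).
Qed.

Lemma TI2 (R : realType) (j k : nat) (h : torus R (j + k) -> \bar R) :
  measurable_fun setT h -> (forall x, 0 <= h x) ->
  \int[torus_measure R (j + k)]_w h w =
  \int[torus_measure R k]_t \int[torus_measure R j]_x h (tjoin x t).
Proof.
move=> mh h0; rewrite TI1 //.
have mF : measurable_fun setT (fun z : torus R j * torus R k => h (tjoin z.1 z.2)).
  exact: (measurableT_comp mh (measurable_tjoin R j k)).
have e1 := @fubini_tonelli1 _ _ _ _ R (torus_measure R j) (torus_measure R k) _ mF (fun z => h0 _).
have e2 := @fubini_tonelli2 _ _ _ _ R (torus_measure R j) (torus_measure R k) _ mF (fun z => h0 _).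
etransitivity; [exact: (esym e1)|exact: e2].
Qed.

Lemma measurable_TI_G (R : realType) (j k : nat) (h : torus R (j + k) -> \bar R) :
  measurable_fun setT h -> (forall x, 0 <= h x) ->
  measurable_fun setT (fun t : torus R k => \int[torus_measure R j]_x h (tjoin x t)).
Proof.
move=> mh h0.
have mF : measurable_fun setT (fun z : torus R j * torus R k => h (tjoin z.1 z.2)).
  exact: (measurableT_comp mh (measurable_tjoin R j k)).
exact: (@measurable_fun_fubini_tonelli_G _ _ _ _ R (torus_measure R j) _ mF (fun z => h0 _)).
Qed.

Lemma measurable_Rint_sec (R : realType) (j k : nat) (u : torus R (j + k) -> R) :
  measurable_fun setT u ->
  measurable_fun setT (fun t : torus R k => fine (\int[torus_measure R j]_x (u (tjoin x t))%:E)).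
Proof.
move=> mu.
have mue : measurable_fun setT (fun w => (u w)%:E) by exact/measurable_EFinP.
have mP : measurable_fun setT (fun w => maxe (u w)%:E 0).
  exact: (measurable_maxe mue (measurable_cst _)).
have mN : measurable_fun setT (fun w => maxe (- (u w)%:E) 0).
  apply: (measurable_maxe _ (measurable_cst _)).
  exact: measurableT_comp mue.
rewrite (_ : (fun t => _) = (fun t => fine (\int[torus_measure R j]_x maxe (u (tjoin x t))%:E 0
      - \int[torus_measure R j]_x maxe (- (u (tjoin x t))%:E) 0))); last first.
  apply/funext => t; rewrite integralE; congr (fine (_ - _)).
    by apply: eq_integral => x _; rewrite funeposE.
  by apply: eq_integral => x _; rewrite funenegE.
apply: (measurableT_comp (fine_measurable measurableT)).
apply: emeasurable_funB.
  apply: (@measurable_TI_G R j k (fun w => maxe (u w)%:E 0) mP) => w.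
  by rewrite le_max lexx orbT.
apply: (@measurable_TI_G R j k (fun w => maxe (- (u w)%:E) 0) mN) => w.
by rewrite le_max lexx orbT.
Qed.

Lemma measurable_hat (R : realType) (j k : nat) (g : torus R (j + k) -> R[i]) :
  cmeasurable g -> cmeasurable (hat g).
Proof.
move=> [gr gi]; split.
  exact: (@measurable_Rint_sec R j k (fun w => complex.Re (g w)) gr).
exact: (@measurable_Rint_sec R j k (fun w => complex.Im (g w)) gi).
Qed.

Lemma jensen1 d (T : measurableType d) (R : realType) (mu : probability T R)
  (f : T -> R) (p : R) : measurable_fun setT f -> (1 <= p)%R ->
  Lnorm mu 1 (EFin \o f) <= Lnorm mu p%:E (EFin \o f).
Proof.
move=> mf p1.
have [->|pn1] := eqVneq p 1%R; first by [].
have p1' : (1 < p)%R by rewrite lt_neqAle eq_sym pn1.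
have p0 : (0 < p)%R by rewrite (lt_trans ltr01).
pose q := (1 - p^-1)^-1%R.
have ip1 : (p^-1 < 1)%R by rewrite invf_lt1.
have q0 : (0 < q)%R by rewrite /q invr_gt0 subr_gt0.
have pq : (p^-1 + q^-1 = 1)%R by rewrite /q invrK addrC subrK.
have := @hoelder _ _ _ mu f (cst 1%R) p q mf (measurable_cst _) p0 q0 pq.
rewrite Lnorm_cst1.
have h1 : (mu [set: T] `^ q^-1) = 1 by rewrite probability_setT poweR1r.
rewrite h1 mule1.
have -> : (f \* cst 1)%R = f by apply/funext => x /=; rewrite mulr1.
by [].
Qed.

Lemma absRint_le d (T : measurableType d) (R : realType) (mu : {measure set T -> \bar R})
  (f : T -> R) : measurable_fun setT f ->
  (`|Rintegral mu setT f|)%:E <= \int[mu]_x (`|f x|)%:E.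
Proof.
move=> mf; rewrite /Rintegral.
have [fin|nfin] := boolP (\int[mu]_(x in setT) (f x)%:E \is a fin_num).
  rewrite -fine_abse // fineK ?abse_fin_num //.
  rewrite (_ : \int[mu]_x (`|f x|)%:E = \int[mu]_x `|(f x)%:E|); last first.
    by apply: eq_integral => x _.
  apply: (le_abse_integral mu measurableT).
  exact/measurable_EFinP.
have -> : fine (\int[mu]_(x in setT) (f x)%:E) = 0%R.
  by move: nfin; case: (\int[mu]_(x in setT) (f x)%:E).
by rewrite normr0; apply: integral_ge0 => x _; rewrite lee_fin.
Qed.

Lemma measurable_sec (R : realType) (j k : nat) (u : torus R (j + k) -> R) (t : torus R k) :
  measurable_fun setT u -> measurable_fun setT (fun x : torus R j => u (tjoin x t)).
Proof. move=> mu; exact: (measurableT_comp mu (measurable_tjoin_l R j k t)). Qed.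

Lemma hat_bound (R : realType) (j k : nat) (g : torus R (j + k) -> R[i]) (t : torus R k) :
  cmeasurable g ->
  (cmod (hat g t))%:E <= 2%:E * \int[torus_measure R j]_x (cmod (g (tjoin x t)))%:E.
Proof.
move=> hg; have [gr gi] := hg.
have mc := @measurable_cmod _ _ R g hg.
set I := \int[torus_measure R j]_x (cmod (g (tjoin x t)))%:E.
have mI : measurable_fun setT (fun x => (cmod (g (tjoin x t)))%:E).
  by apply/measurable_EFinP; exact: (@measurable_sec R j k (fun w => cmod (g w)) t mc).
have hR : (`|complex.Re (hat g t)|)%:E <= I.
  rewrite /hat /cintegral /=.
  have ms := @measurable_sec R j k (fun w => complex.Re (g w)) t gr.
  apply: (le_trans (@absRint_le _ _ _ (torus_measure R j) _ ms)).
  apply: ge0_le_integral => //.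
  - by apply/measurable_EFinP; apply: (measurableT_comp _ ms); exact: normr_measurable.
  - by move=> x _; rewrite lee_fin Re_le_cmod.
have hI : (`|complex.Im (hat g t)|)%:E <= I.
  rewrite /hat /cintegral /=.
  have ms := @measurable_sec R j k (fun w => complex.Im (g w)) t gi.
  apply: (le_trans (@absRint_le _ _ _ (torus_measure R j) _ ms)).
  apply: ge0_le_integral => //.
  - by apply/measurable_EFinP; apply: (measurableT_comp _ ms); exact: normr_measurable.
  - by move=> x _; rewrite lee_fin Im_le_cmod.
apply: le_trans (_ : (`|complex.Re (hat g t)| + `|complex.Im (hat g t)|)%:E <= _).
  by rewrite lee_fin cmod_le.
rewrite EFinD (_ : 2%:E = 1 + 1) // ge0_muleDl ?mul1e //.
exact: leeD.
Qed.

Lemma in_0y (R : realType) (x : \bar R) : 0 <= x -> x \in `[0, +oo%E]%R.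
Proof. by move=> x0; rewrite in_itv /= x0 leey. Qed.

Lemma hat_Lnorm (R : realType) (j k : nat) (p : R) (g : torus R (j + k) -> R[i]) :
  (1 <= p)%R -> cmeasurable g ->
  cLnorm (torus_measure R k) p (hat g) <= 2%:E * cLnorm (torus_measure R (j + k)) p g.
Proof.
move=> p1 hg.
have p0 : (0 < p)%R by rewrite (lt_le_trans ltr01).
have pn0 : p != 0%R by rewrite gt_eqF.
have mc := @measurable_cmod _ _ R g hg.
have mhc := @measurable_cmod _ _ R _ (@measurable_hat R j k g hg).
pose Np t := Lnorm (torus_measure R j) p%:E (EFin \o (fun x => cmod (g (tjoin x t)))).
have pw t : (cmod (hat g t))%:E <= 2%:E * Np t.
  apply: (le_trans (@hat_bound R j k g t hg)).
  rewrite lee_pmul2l ?lte_fin //.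
  have ms := @measurable_sec R j k (fun w => cmod (g w)) t mc.
  apply: le_trans (@jensen1 _ _ R (torus_measure R j) _ p ms p1).
  rewrite Lnorm1; apply: ge0_le_integral => //.
  - by move=> x _; rewrite lee_fin cmod_ge0.
  - exact/measurable_EFinP.
  - by apply: measurableT_comp => //; exact/measurable_EFinP.
  - by move=> x _ /=; rewrite lee_fin ler_norm.
have mS : measurable_fun setT (fun t => \int[torus_measure R j]_x
     `|(cmod (g (tjoin x t)))%:E| `^ p).
  apply: (@measurable_TI_G R j k (fun w => `|(cmod (g w))%:E| `^ p)) => //.
    apply: measurableT_comp (measurable_poweR p) _.
    by apply: measurableT_comp => //; exact/measurable_EFinP.
  by move=> w; exact: poweR_ge0.
have key : \int[torus_measure R k]_t `|(cmod (hat g t))%:E| `^ p <=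
    2%:E `^ p * \int[torus_measure R (j + k)]_w `|(cmod (g w))%:E| `^ p.
  rewrite TI2 //; last 2 first.
  - apply: measurableT_comp (measurable_poweR p) _.
    by apply: measurableT_comp => //; exact/measurable_EFinP.
  - by move=> w; exact: poweR_ge0.
  rewrite -(@ge0_integralZl _ _ _ (torus_measure R k) setT measurableT _ mS (2%:E `^ p)); last 2 first.
  - by move=> t _; apply: integral_ge0 => x _; exact: poweR_ge0.
  - exact: poweR_ge0.
  apply: ge0_le_integral => //.
  - by move=> t _; exact: poweR_ge0.
  - apply: measurableT_comp (measurable_poweR p) _.
    by apply: measurableT_comp => //; exact/measurable_EFinP.
  - exact: measurable_funeM.
  move=> t _.
  rewrite -(poweR_Lnorm _ _ pn0) -poweRM //; last exact: Lnorm_ge0.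
  apply: gt0_ler_poweR; first exact: ltW.
  - exact: in_0y.
  - by apply: in_0y; apply: mule_ge0 => //; exact: Lnorm_ge0.
  by rewrite gee0_abs ?lee_fin ?cmod_ge0 //; exact: pw.
rewrite /cLnorm unlock /Lnorm.
apply: le_trans (_ : (2%:E `^ p * \int[torus_measure R (j + k)]_w `|(cmod (g w))%:E| `^ p) `^ p^-1 <= _).
  apply: gt0_ler_poweR => //.
  - by rewrite invr_ge0 ltW.
  - by apply: in_0y; apply: integral_ge0 => t _; exact: poweR_ge0.
  - apply: in_0y; apply: mule_ge0; first exact: poweR_ge0.
    by apply: integral_ge0 => t _; exact: poweR_ge0.
rewrite poweRM //; last 2 first.
- exact: poweR_ge0.
- by apply: integral_ge0 => t _; exact: poweR_ge0.
by rewrite -poweRrM mulfV // poweRe1.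
Qed.

Lemma ae_fin d (T : measurableType d) (R : realType) (mu : {measure set T -> \bar R})
  (F : T -> \bar R) : measurable_fun setT F -> (forall x, 0 <= F x) ->
  \int[mu]_x F x < +oo -> {ae mu, forall x, F x < +oo}.
Proof.
move=> mF F0 Ffin.
have iF : mu.-integrable setT F.
  apply/integrableP; split => //.
  by under eq_integral do rewrite gee0_abs //.
have := integrable_ae measurableT iF.
apply: filterS => x /(_ I).
by rewrite ge0_fin_numE.
Qed.

Lemma complex_ext (R : realType) (z w : R[i]) :
  complex.Re z = complex.Re w -> complex.Im z = complex.Im w -> z = w.
Proof. by case: z => a b; case: w => c e /= -> ->. Qed.

Lemma integrable_of_cmod d (T : measurableType d) (R : realType) (mu : {measure set T -> \bar R})
  (g : T -> R[i]) : cmeasurable g -> \int[mu]_x (cmod (g x))%:E < +oo ->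
  mu.-integrable setT (EFin \o (fun x => complex.Re (g x))) /\
  mu.-integrable setT (EFin \o (fun x => complex.Im (g x))).
Proof.
move=> [gr gi] fin; split; apply/integrableP; split.
- exact/measurable_EFinP.
- apply: le_lt_trans fin; apply: ge0_le_integral => //.
  + by apply: measurableT_comp => //; exact/measurable_EFinP.
  + by apply/measurable_EFinP; exact: (@measurable_cmod _ _ R g).
  + by move=> x _; rewrite /= lee_fin Re_le_cmod.
- exact/measurable_EFinP.
- apply: le_lt_trans fin; apply: ge0_le_integral => //.
  + by apply: measurableT_comp => //; exact/measurable_EFinP.
  + by apply/measurable_EFinP; exact: (@measurable_cmod _ _ R g).
  + by move=> x _; rewrite /= lee_fin Im_le_cmod.
Qed.

Lemma hat_sub_ae (R : realType) (j k : nat) (g1 g2 : torus R (j + k) -> R[i]) :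
  cmeasurable g1 -> cmeasurable g2 ->
  \int[torus_measure R (j + k)]_w (cmod (g1 w))%:E < +oo ->
  \int[torus_measure R (j + k)]_w (cmod (g2 w))%:E < +oo ->
  {ae torus_measure R k, forall t, (hat g1 t - hat g2 t)%R = hat (fun w => g1 w - g2 w)%R t}.
Proof.
move=> h1 h2 f1 f2.
have sec_ae (g : torus R (j + k) -> R[i]) : cmeasurable g ->
    \int[torus_measure R (j + k)]_w (cmod (g w))%:E < +oo ->
    {ae torus_measure R k, forall t,
      \int[torus_measure R j]_x (cmod (g (tjoin x t)))%:E < +oo}.
  move=> hg fg.
  have mc := @measurable_cmod _ _ R g hg.
  have mce : measurable_fun setT (fun w => (cmod (g w))%:E) by exact/measurable_EFinP.
  apply: ae_fin.
  - have c0 : forall w, 0 <= (cmod (g w))%:E by move=> w; rewrite lee_fin cmod_ge0.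
    exact: (@measurable_TI_G R j k (fun w => (cmod (g w))%:E) mce c0).
  - by move=> t; apply: integral_ge0 => x _; rewrite lee_fin cmod_ge0.
  by rewrite -(@TI2 R j k (fun w => (cmod (g w))%:E)) // => w; rewrite lee_fin cmod_ge0.
have := sec_ae g1 h1 f1; have := sec_ae g2 h2 f2.
apply: filterS2 => t s2 s1.
have hs1 : cmeasurable (fun x : torus R j => g1 (tjoin x t)).
  exact: (@cmeasurable_comp _ _ _ _ R _ _ h1 (measurable_tjoin_l R j k t)).
have hs2 : cmeasurable (fun x : torus R j => g2 (tjoin x t)).
  exact: (@cmeasurable_comp _ _ _ _ R _ _ h2 (measurable_tjoin_l R j k t)).
have [i1r i1i] := @integrable_of_cmod _ _ R (torus_measure R j) _ hs1 s1.
have [i2r i2i] := @integrable_of_cmod _ _ R (torus_measure R j) _ hs2 s2.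
apply: complex_ext; rewrite ?ReB ?ImB /hat /cintegral /=.
- rewrite -RintegralB //; apply: eq_Rintegral => x _; by rewrite ReB.
- rewrite -RintegralB //; apply: eq_Rintegral => x _; by rewrite ImB.
Qed.

Lemma Lp_cvg_squeeze d (T : measurableType d) (R : realType) (mu : {measure set T -> \bar R})
  d' (T' : measurableType d') (mu' : {measure set T' -> \bar R}) (p : R)
  (a_ : nat -> T -> R[i]) a (b_ : nat -> T' -> R[i]) b :
  (forall n, cLnorm mu p (fun x => a_ n x - a x)%R <= 2%:E * cLnorm mu' p (fun x => b_ n x - b x)%R) ->
  Lp_cvg mu' p b_ b -> Lp_cvg mu p a_ a.
Proof.
move=> hle hb; rewrite /Lp_cvg.
apply: (@squeeze_cvge _ _ _ _ (cst 0) _ (fun n => 2%:E * cLnorm mu' p (fun x => b_ n x - b x)%R)).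
- apply: nearW => n; rewrite hle andbT.
  exact: Lnorm_ge0.
- exact: cvg_cst.
- rewrite -(mule0 2%:E); apply: cvgeZl => //.
Qed.

Lemma measurable_cpow d (T : measurableType d) (R : realType) (p : R) (u : T -> R[i]) :
  cmeasurable u -> measurable_fun setT (fun x => `|(cmod (u x))%:E| `^ p).
Proof.
move=> hu; apply: measurableT_comp (measurable_poweR p) _.
apply: measurableT_comp => //; apply/measurable_EFinP.
exact: (@measurable_cmod _ _ R u hu).
Qed.

Lemma cLnorm_ae_eq d (T : measurableType d) (R : realType) (mu : {measure set T -> \bar R})
  (p : R) (u v : T -> R[i]) : cmeasurable u -> cmeasurable v ->
  {ae mu, forall x, u x = v x} -> cLnorm mu p u = cLnorm mu p v.
Proof.
move=> hu hv huv; rewrite /cLnorm unlock.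
rewrite (@ae_eq_integral _ _ _ mu setT (fun x => `|(cmod (v x))%:E| `^ p)
   (fun x => `|(cmod (u x))%:E| `^ p)).
- by [].
- exact: measurableT.
- exact: (@measurable_cpow _ _ R p u hu).
- exact: (@measurable_cpow _ _ R p v hv).
- by apply: filterS huv => x /= -> _.
Qed.

Lemma key_cvg (R : realType) (j k : nat) (p : R)
  (g_ : nat -> torus R (j + k) -> R[i]) (g : torus R (j + k) -> R[i]) :
  (1 <= p)%R -> (forall n, cmeasurable (g_ n)) -> cmeasurable g ->
  (forall n, \int[torus_measure R (j + k)]_w (cmod (g_ n w))%:E < +oo) ->
  \int[torus_measure R (j + k)]_w (cmod (g w))%:E < +oo ->
  Lp_cvg (torus_measure R (j + k)) p g_ g ->
  Lp_cvg (torus_measure R k) p (fun n => hat (g_ n)) (hat g).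
Proof.
move=> p1 hgn hg fgn fg hcv.
apply: (@Lp_cvg_squeeze _ _ R (torus_measure R k) _ _ (torus_measure R (j + k)) p _ _ g_ g _ hcv).
move=> n.
rewrite (@cLnorm_ae_eq _ _ R _ p _ (hat (fun w => g_ n w - g w)%R)).
- exact: (@hat_Lnorm R j k p _ p1 (@cmeasurableB _ _ R _ _ (hgn n) hg)).
- exact: (@cmeasurableB _ _ R _ _ (@measurable_hat R j k _ (hgn n)) (@measurable_hat R j k _ hg)).
- exact: (@measurable_hat R j k _ (@cmeasurableB _ _ R _ _ (hgn n) hg)).
exact: (@hat_sub_ae R j k _ _ (hgn n) hg (fgn n) fg).
Qed.

Lemma L1_of_Lp d (T : measurableType d) (R : realType) (mu : probability T R) (p : R)
  (g : T -> R[i]) : (1 <= p)%R -> cmeasurable g -> cLnorm mu p g < +oo ->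
  \int[mu]_x (cmod (g x))%:E < +oo.
Proof.
move=> p1 hg fin.
have := @jensen1 _ _ R mu _ p (@measurable_cmod _ _ R g hg) p1.
rewrite Lnorm1 => H.
have := le_lt_trans H fin.
congr (_ < _); apply: eq_integral => x _ /=.
by rewrite ger0_norm // cmod_ge0.
Qed.

Lemma tcast_pair (R : realType) (m n : nat) (e : m.+1 = n.+1) (u : R) (v : torus R m) :
  @Defs.tcast R m.+1 n.+1 e (u, v) = (u, @Defs.tcast R m n (succn_inj e) v).
Proof.
have E := succn_inj e; subst n.
have -> : succn_inj e = erefl by exact: eq_irrelevance.
by have -> : e = erefl by exact: eq_irrelevance.
Qed.

Lemma tjoin_assoc (R : realType) (j a b : nat) (e' : (j + a + b = j + (a + b))%N)
  (x : torus R j) (y : torus R a) (s : torus R b) :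
  tjoin x (tjoin y s) = Defs.tcast e' (tjoin (tjoin x y) s).
Proof.
elim: j e' x => [|j IH] e' x /=.
  by have -> : e' = erefl by exact: eq_irrelevance.
case: x => x1 x2.
rewrite (@tcast_pair R (j + a + b)%N (j + (a + b))%N e' x1).
by rewrite -IH.
Qed.

Lemma tjoin_assoc' (R : realType) (j a b k : nat) (e : (a + b = k)%N) (e' : (j + a + b = j + k)%N)
  (x : torus R j) (y : torus R a) (s : torus R b) :
  tjoin x (Defs.tcast e (tjoin y s)) = Defs.tcast e' (tjoin (tjoin x y) s).
Proof. move: e'; case: k / e => e'; exact: tjoin_assoc. Qed.

Lemma measurable_tcast (R : realType) (m n : nat) (e : m = n) :
  measurable_fun setT (@Defs.tcast R m n e).
Proof. by case: n / e; exact: measurable_id. Qed.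

Lemma integral_tcast (R : realType) (m n : nat) (e : m = n) (h : torus R n -> \bar R) :
  \int[torus_measure R n]_w h w = \int[torus_measure R m]_z h (Defs.tcast e z).
Proof. by case: n / e h => h. Qed.

Lemma sec_fin_ae (R : realType) (j a b k : nat) (e' : (j + a + b = j + k)%N)
  (g : torus R (j + k) -> R[i]) : cmeasurable g ->
  \int[torus_measure R (j + k)]_w (cmod (g w))%:E < +oo ->
  {ae torus_measure R b, forall s,
    \int[torus_measure R (j + a)]_z (cmod (g (Defs.tcast e' (tjoin z s))))%:E < +oo}.
Proof.
move=> hg fg.
have mc := @measurable_cmod _ _ R g hg.
have mh : measurable_fun setT (fun w : torus R (j + a + b) => (cmod (g (Defs.tcast e' w)))%:E).
  apply/measurable_EFinP.
  exact: (measurableT_comp mc (measurable_tcast R _ _ e')).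
have h0 : forall w : torus R (j + a + b), 0 <= (cmod (g (Defs.tcast e' w)))%:E.
  by move=> w; rewrite lee_fin cmod_ge0.
apply: ae_fin.
- exact: (@measurable_TI_G R (j + a)%N b _ mh h0).
- by move=> s; apply: integral_ge0 => z _; rewrite lee_fin cmod_ge0.
rewrite -(@TI2 R (j + a)%N b _ mh h0).
by rewrite -(@integral_tcast R _ _ e' (fun w => (cmod (g w))%:E)).
Qed.

Lemma main_aux (R : realType) (j k : nat) (p : R)
  (hj : (1 <= j)%N) (hk : (1 <= k)%N) (hp : (1 <= p)%R)
  (f_ : nat -> torus R (j + k) -> R[i]) (f : torus R (j + k) -> R[i]) :
  restr_cvg p f_ f ->
  restr_cvg p (fun n => hat (f_ n)) (hat f).
Proof.
move=> [hf2 hfp hcv h4].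
have p12 : (1 <= 2 :> R)%R by rewrite ler1n.
have L1n n : \int[torus_measure R (j + k)]_w (cmod (f_ n w))%:E < +oo.
  exact: (@L1_of_Lp _ _ R (torus_measure R (j + k)) 2 _ p12 (hf2 n).1 (hf2 n).2).
have L1f : \int[torus_measure R (j + k)]_w (cmod (f w))%:E < +oo.
  exact: (@L1_of_Lp _ _ R (torus_measure R (j + k)) p _ hp hfp.1 hfp.2).
split.
- move=> n; split; first exact: (@measurable_hat R j k _ (hf2 n).1).
  apply: le_lt_trans (@hat_Lnorm R j k 2 _ p12 (hf2 n).1) _.
  by apply: lte_mul_pinfty => //; exact: (hf2 n).2.
- split; first exact: (@measurable_hat R j k _ hfp.1).
  apply: le_lt_trans (@hat_Lnorm R j k p _ hp hfp.1) _.
  by apply: lte_mul_pinfty => //; exact: hfp.2.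
- exact: (@key_cvg R j k p f_ f hp (fun n => (hf2 n).1) hfp.1 L1n L1f hcv).
move=> a b e a1 b1.
have e' : (j + a + b = j + k)%N by rewrite -addnA e.
have H := h4 (j + a)%N b e' (leq_trans hj (leq_addr _ _)) b1.
have Af := @sec_fin_ae R j a b k e' f hfp.1 L1f.
have An : {ae torus_measure R b, forall s n,
    \int[torus_measure R (j + a)]_z (cmod (f_ n (Defs.tcast e' (tjoin z s))))%:E < +oo}.
  apply: ae_foralln => n.
  exact: (@sec_fin_ae R j a b k e' (f_ n) (hf2 n).1 (L1n n)).
move: H Af An; apply: filterS3 => s Hs Afs Ans.
have cm (g : torus R (j + k) -> R[i]) : cmeasurable g ->
    cmeasurable (fun z : torus R (j + a) => g (Defs.tcast e' (tjoin z s))).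
  move=> hg; apply: (@cmeasurable_comp _ _ _ _ R _ _ hg).
  exact: (measurableT_comp (measurable_tcast R _ _ e') (measurable_tjoin_l R (j + a) b s)).
have eqh (g : torus R (j + k) -> R[i]) :
    (fun y => hat g (Defs.tcast e (tjoin y s))) =
    hat (fun z : torus R (j + a) => g (Defs.tcast e' (tjoin z s))).
  apply/funext => y; rewrite /hat; congr cintegral; apply/funext => x.
  by rewrite (@tjoin_assoc' R j a b k e e').
rewrite (_ : (fun n y => _) = (fun n => hat (fun z : torus R (j + a) => f_ n (Defs.tcast e' (tjoin z s))))); last first.
  by apply/funext => n; exact: eqh.
rewrite eqh.
apply: (@key_cvg R j a p _ _ hp) => //.
- by move=> n; exact: cm (hf2 n).1.
- exact: cm hfp.1.
Qed.

Local Close Scope ereal_scope.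
Local Close Scope classical_set_scope.

(* N = j + k with 1 <= j <= N - 1, i.e. j >= 1 and k = N - j >= 1 (so N >= 2). *)
Theorem lemma7p2 (R : realType) (j k : nat) (p : R)
  (hj : (1 <= j)%N) (hk : (1 <= k)%N) (hp : 1 <= p)
  (f_ : nat -> torus R (j + k) -> R[i]) (f : torus R (j + k) -> R[i]) :
  restr_cvg p f_ f ->
  restr_cvg p (fun n => hat (f_ n)) (hat f).
Proof. exact: main_aux. Qed.
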